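(* If the genus function $g$ satisfies $g(n)\gg n/\log n$, then $\left(|\mathrm{Hered}(\mathcal F^g)_n|/n!\right)^{1/n}\to\infty$ as $n\to\infty$.
   Context: All graphs are finite and simple; $\mathcal B_n$ is the set of graphs in a class $\mathcal B$ on vertex set $[n]$. A genus function is $g:\mathbb N\to\mathbb N_0$. $\mathcal F^g$ is the class of graphs $G$ such that, if $G$ has $n$ vertices, every cellular embedding of $G$ has Euler genus at most $g(n)$; equivalently the cycle rank $e(G)-v(G)+\kappa(G)$ is at most $g(n)$ ($\kappa(G)$ = number of components). $\mathrm{Hered}(\mathcal B)$ is the class of graphs $G$ with $G[W]\in\mathcal B$ for every nonempty $W\subseteq V(G)$ (so for $G[W]$ the relevant bound is $g(|W|)$). $x\ll y$ means $x/y\to0$. *)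

(* Defs.v *)
From mathcomp Require Import all_boot.
From Stdlib Require Import Reals.

Set Implicit Arguments.
Unset Strict Implicit.
Unset Printing Implicit Defensive.

(* A simple graph on vertex set [n] = 'I_n is given by its edge set:
   a set of 2-element subsets of 'I_n. *)
Definition simple_graph (n : nat) (E : {set {set 'I_n}}) : bool :=
  [forall e in E, #|e| == 2].

Definition induced_adj (n : nat) (E : {set {set 'I_n}}) (W : {set 'I_n}) : rel 'I_n :=
  fun x y => [&& x \in W, y \in W & [set x; y] \in E].

Definition n_edges_on (n : nat) (E : {set {set 'I_n}}) (W : {set 'I_n}) : nat :=
  #|[set e in E | e \subset W]|.

Definition n_components_on (n : nat) (E : {set {set 'I_n}}) (W : {set 'I_n}) : nat :=
  n_comp (induced_adj E W) (mem W).

(* Cycle rank e(G[W]) - v(G[W]) + kappa(G[W]); the truncated nat subtraction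
   is harmless since e + kappa >= v always holds. *)
Definition cycle_rank_on (n : nat) (E : {set {set 'I_n}}) (W : {set 'I_n}) : nat :=
  (n_edges_on E W + n_components_on E W - #|W|)%N.

Definition in_Fg_on (g : nat -> nat) (n : nat) (E : {set {set 'I_n}}) (W : {set 'I_n}) : bool :=
  (cycle_rank_on E W <= g #|W|)%N.

Definition in_Fg (g : nat -> nat) (n : nat) (E : {set {set 'I_n}}) : bool :=
  in_Fg_on g E [set: 'I_n].

Definition in_Hered_Fg (g : nat -> nat) (n : nat) (E : {set {set 'I_n}}) : bool :=
  [forall W : {set 'I_n}, (W != set0) ==> in_Fg_on g E W].

Definition count_Hered_Fg (g : nat -> nat) (n : nat) : nat :=
  #|[set E : {set {set 'I_n}} | simple_graph E && in_Hered_Fg g E]|.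

(* Main.v *)
Require Import Defs.
From mathcomp Require Import all_boot.
From mathcomp Require Import fingroup perm.
From mathcomp Require Import zify.
From Stdlib Require Import Reals Lra.
Set Implicit Arguments.
Unset Strict Implicit.
Unset Printing Implicit Defensive.
Local Notation "m ^ n" := (expn m n) : nat_scope.

Lemma set2_eq (T : finType) (a b c d : T) :
  [set a; b] = [set c; d] -> (a = c /\ b = d) \/ (a = d /\ b = c).
Proof.
move=> E.
have ha : a \in [set c; d] by rewrite -E set21.
have hb : b \in [set c; d] by rewrite -E set22.
have hc : c \in [set a; b] by rewrite E set21.
have hd : d \in [set a; b] by rewrite E set22.
case/set2P: ha => ea; case/set2P: hb => eb; subst; auto;
by case/set2P: hc => ec; case/set2P: hd => ed; subst; auto.
Qed.

Lemma fact_ge (m k : nat) : m ^ (k - m) <= k`!.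
Proof.
elim: k => [|k IH]; first by rewrite sub0n expn0.
case: (leqP m k) => hmk.
  rewrite subSn // expnS factS; apply: leq_mul => //; lia.
have -> : k.+1 - m = 0 by lia.
by rewrite expn0 fact_gt0.
Qed.

Section Comp.
Variables (T : finType) (e : rel T) (W : {set T}) (r : T -> nat).
Hypothesis esym : symmetric e.
Hypothesis eW : forall x y, e x y -> (x \in W) && (y \in W).

Definition lowc (v : T) : bool :=
  [exists u, (u \in W) && (r u < r v) && connect e v u].

Lemma closedW : closed e W.
Proof. by move=> x y /eW /andP[-> ->]. Qed.

Lemma comp_le : n_comp e (mem W) <= #|[set v in W | ~~ lowc v]|.
Proof.
have csym := sym_connect_sym esym.
rewrite /n_comp_mem.
pose f x := [arg min_(u < x | connect e x u) r u].
set A := [set x | roots e x && (x \in W)].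
have -> : #|predI (roots e) (mem (mem W))| = #|A|.
  by apply: eq_card => x; rewrite !inE.
have fP x : connect e x (f x) /\ forall u, connect e x u -> r (f x) <= r u.
  by rewrite /f; case: arg_minnP => // i Hi Hm; split.
have injf : {in A &, injective f}.
  move=> x y; rewrite !inE => /andP[/eqP rx _] /andP[/eqP ry _] fxy.
  have [c1 _] := fP x; have [c2 _] := fP y.
  rewrite fxy in c1.
  have cxy : connect e x y by apply: connect_trans c1 _; rewrite csym.
  by rewrite -rx -ry; apply/rootP.
rewrite -(card_in_imset injf); apply: subset_leq_card.
apply/subsetP => z /imsetP[x xA ->]; move: xA; rewrite /A inE; case/andP => _ xW.
have [c1 m1] := fP x.
have fW : f x \in W by rewrite -(closed_connect closedW c1).
rewrite inE fW /=; apply/negP; case/existsP => u /andP[/andP[uW ru] cu].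
have := m1 u (connect_trans c1 cu); lia.
Qed.
End Comp.

Lemma card_disjU (T : finType) (A B : {set T}) :
  (forall x, x \in A -> x \in B -> False) -> #|A :|: B| = #|A| + #|B|.
Proof.
move=> H; have := cardsUI A B.
have -> : A :&: B = set0.
  by apply/setP => x; rewrite !inE; apply/negP => /andP[/H h /h].
by rewrite cards0 addn0.
Qed.

Section Constr.
Variables (m D h : nat).
Hypothesis hD : 2 <= D.
Hypothesis hh : 2 * h * D <= m.+1.

Definition pv (s : {perm 'I_m.+1}) (i : nat) : 'I_m.+1 := s (inord i).
Definition pos (s : {perm 'I_m.+1}) (v : 'I_m.+1) : nat := (s^-1)%g v.

Lemma pv_inj s i j : i <= m -> j <= m -> pv s i = pv s j -> i = j.
Proof.
move=> hi hj /perm_inj E.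
by rewrite -(@inordK m i) // -(@inordK m j) // E.
Qed.

Lemma pv_pos s v : pv s (pos s v) = v.
Proof. by rewrite /pv /pos inord_val permKV. Qed.

Lemma pos_pv s i : i <= m -> pos s (pv s i) = i.
Proof. by move=> hi; rewrite /pv /pos permK inordK. Qed.

Lemma pos_le s v : pos s v <= m.
Proof. by rewrite /pos -ltnS ltn_ord. Qed.

Definition qp (p : {perm 'I_h}) (j : 'I_h) : nat := (h + p j) * D.

Lemma qp_le p j : qp p j <= m.
Proof.
rewrite /qp; have := ltn_ord (p j); have := ltn_ord j => h1 h2.
have : (h + p j).+1 * D <= 2 * h * D.
  apply: leq_mul => //; lia.
nia.
Qed.

Lemma qp_ge p (j : 'I_h) : j * D + D <= qp p j.
Proof.
rewrite /qp; have := ltn_ord j => h1.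
have : j.+1 * D <= (h + p j) * D by apply: leq_mul => //; lia.
rewrite mulSn; lia.
Qed.

Lemma qp_geD p (j : 'I_h) : D <= qp p j.
Proof. have := qp_ge p j; lia. Qed.

Definition pathE s := [set [set pv s i; pv s i.+1] | i : 'I_m].
Definition chordE s p := [set [set pv s (j * D); pv s (qp p j)] | j : 'I_h].
Definition Gr s p := pathE s :|: chordE s p.

Lemma jD_le (j : 'I_h) : j * D <= m.
Proof. have := qp_ge (1%g) j; have := qp_le 1%g j; lia. Qed.

Lemma Gr_simple s p : simple_graph (Gr s p).
Proof.
apply/forall_inP => e; rewrite inE => /orP[] /imsetP[i _ ->].
  suff Hne : pv s i != pv s i.+1 by rewrite cards2 Hne.
  apply/eqP => /(pv_inj _ _) H.
  have := H (ltnW (ltn_ord i)) (ltn_ord i); lia.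
suff Hne : pv s (i * D) != pv s (qp p i) by rewrite cards2 Hne.
apply/eqP => /(pv_inj (jD_le i) (qp_le p i)).
have := qp_ge p i; lia.
Qed.


Section Hered.
Variables (s : {perm 'I_m.+1}) (p : {perm 'I_h}) (W : {set 'I_m.+1}).
Local Notation E := (Gr s p).
Local Notation R := (induced_adj E W).

Lemma R_sym : symmetric R.
Proof. by move=> x y; rewrite /induced_adj setUC andbCA. Qed.

Lemma R_W x y : R x y -> (x \in W) && (y \in W).
Proof. by case/and3P => -> ->. Qed.

Lemma path_in i : i < m -> [set pv s i; pv s i.+1] \in E.
Proof.
move=> hi; rewrite inE; apply/orP; left.
by apply/imsetP; exists (Ordinal hi).
Qed.

Lemma chord_in (j : 'I_h) : [set pv s (j * D); pv s (qp p j)] \in E.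
Proof. by rewrite inE; apply/orP; right; apply/imsetP; exists j. Qed.

Lemma run_connect a d : a + d <= m ->
  (forall k, a <= k <= a + d -> pv s k \in W) -> connect R (pv s a) (pv s (a + d)).
Proof.
elim: d => [|d IH] hle hW; first by rewrite addn0 connect0.
apply: connect_trans (IH _ _) _; first by lia.
  by move=> k hk; apply: hW; lia.
apply: connect1; rewrite /induced_adj addnS.
have h1 : pv s (a + d) \in W by apply: hW; lia.
have h2 : pv s (a + d).+1 \in W by apply: hW; lia.
rewrite h1 h2 /=; apply: path_in; lia.
Qed.

Definition lw := lowc R W (pos s).
Definition Aset := [set v in W | (0 < pos s v) && (pv s (pos s v).-1 \in W)].
Definition Zset := [set v in W | ~~ lw v].
Definition Jin := [set j : 'I_h | (pv s (j * D) \in W) && (pv s (qp p j) \in W)].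
Definition full (j : 'I_h) := [forall t : 'I_D, pv s (qp p j - t) \in W].
Definition J1 := [set j in Jin | full j].
Definition J2 := [set j in Jin | ~~ full j].

Fixpoint back (k q : nat) : nat :=
  match k with
  | 0 => q
  | k'.+1 => if (0 < q) && (pv s q.-1 \in W) then back k' q.-1 else q
  end.

Lemma back_spec k q : pv s q \in W ->
  [/\ back k q <= q, q <= back k q + k,
      (forall t, back k q <= t <= q -> pv s t \in W) &
      (back k q + k == q) || (back k q == 0) || (pv s (back k q).-1 \notin W)].
Proof.
elim: k q => [|k IH] q hq /=.
  split => //; first by lia.
    by move=> t ht; have -> : t = q by lia.
  by rewrite addn0 eqxx.
case: ifP => [/andP[q0 hq1]|hn].
  have [h1 h2 h3 h4] := IH _ hq1.
  split; [lia | lia | | ].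
    move=> t ht; case: (ltnP t q) => htq; first by apply: h3; lia.
    by have -> : t = q by lia.
  case/orP: h4 => [/orP[/eqP h4|->]|->]; last by rewrite orbT.
    by rewrite addnS h4 prednK // eqxx.
  by rewrite orbT.
split => //; first by lia.
  by move=> t ht; have -> : t = q by lia.
case: (posnP q) => [q0|q0]; first by rewrite orbT.
by rewrite q0 /= in hn; rewrite hn orbT.
Qed.


Definition Pin := [set i : 'I_m | (pv s i \in W) && (pv s i.+1 \in W)].

Lemma edges_le : n_edges_on E W <= #|Pin| + #|Jin|.
Proof.
rewrite /n_edges_on.
have sub : [set e in E | e \subset W] \subset
   [set [set pv s i; pv s i.+1] | i : 'I_m in Pin] :|:
   [set [set pv s (j * D); pv s (qp p j)] | j : 'I_h in Jin].
  apply/subsetP => e; rewrite !inE => /andP[].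
  case/orP => /imsetP[i _ ->] /subsetP sub.
    apply/orP; left; apply/imsetP; exists i => //.
    by rewrite inE !sub ?set21 ?set22.
  apply/orP; right; apply/imsetP; exists i => //.
  by rewrite inE !sub ?set21 ?set22.
apply: leq_trans (subset_leq_card sub) _.
apply: leq_trans (leq_card_setU _ _) _.
by apply: leq_add; apply: leq_imset_card.
Qed.

Lemma Pin_le : #|Pin| <= #|Aset|.
Proof.
have inj : {in Pin &, injective (fun i : 'I_m => pv s i.+1)}.
  move=> i j _ _ /(pv_inj (ltn_ord i) (ltn_ord j)) [] /val_inj.
  done.
rewrite -(card_in_imset inj); apply: subset_leq_card.
apply/subsetP => v /imsetP[i]; rewrite inE => /andP[h1 h2] ->.
rewrite inE h2 pos_pv //= h1.
Qed.

Lemma Jin_split : #|Jin| = #|J1| + #|J2|.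
Proof.
rewrite -(cardsID [set j | full j] Jin); congr (_ + _); apply: eq_card => j.
  by rewrite !inE.
by rewrite !inE andbC.
Qed.

Definition vj (j : 'I_h) := pv s (back (D.-1) (qp p j)).

Lemma vj_spec (j : 'I_h) : j \in J2 ->
  [/\ vj j \in W, vj j \notin Aset, lw (vj j) &
      qp p j <= back (D.-1) (qp p j) + D.-1 /\ back (D.-1) (qp p j) <= qp p j].
Proof.
rewrite !inE => /andP[/andP[hj hq] nf].
have [b1 b2 b3 b4] := back_spec (D.-1) hq.
set b := back _ _ in b1 b2 b3 b4 *.
have qD := qp_geD p j; have qm := qp_le p j; have qg := qp_ge p j.
have bpos : 0 < b by lia.
have nW : pv s b.-1 \notin W.
  case/orP: b4 => [/orP[/eqP e|/eqP e]|//]; last by lia.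
  exfalso; move/negP: nf; apply; apply/forallP => t.
  apply: b3; have := ltn_ord t; lia.
have bW : pv s b \in W by apply: b3; lia.
have hbm : b <= m by lia.
split => //.
- by rewrite /vj -/b bW pos_pv //= bpos.
- rewrite /lw /lowc; apply/existsP; exists (pv s (j * D)).
  rewrite /vj -/b hj pos_pv ?jD_le // pos_pv //=.
  apply/andP; split; first by lia.
have e1 : b + (qp p j - b) = qp p j by lia.
  apply: (@connect_trans _ _ (pv s (qp p j))).
    rewrite -e1; apply: run_connect; first by lia.
    by move=> k hk; apply: b3; lia.
  by apply: connect1; rewrite /induced_adj hq hj setUC chord_in.
Qed.

Lemma vj_inj : {in J2 &, injective vj}.
Proof.
move=> j j' hj hj' e.
have [_ _ _ [c1 c2]] := vj_spec hj; have [_ _ _ [c3 c4]] := vj_spec hj'.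
move: e; rewrite /vj => /pv_inj e.
have {}e := e (leq_trans c2 (qp_le _ _)) (leq_trans c4 (qp_le _ _)).
rewrite -e in c3 c4.
have h1 : (h + p j) < (h + p j').+1.
  rewrite -(ltn_pmul2r (ltnW hD)) mulSn; rewrite /qp in c1 c4; lia.
have h2 : (h + p j') < (h + p j).+1.
  rewrite -(ltn_pmul2r (ltnW hD)) mulSn; rewrite /qp in c2 c3; lia.
apply: (@perm_inj _ p); apply: ord_inj; lia.
Qed.

Lemma J1_le : #|J1| * D <= #|W|.
Proof.
pose f (x : 'I_h * 'I_D) := pv s (qp p x.1 - x.2).
have inj : {in setX J1 [set: 'I_D] &, injective f}.
  move=> [j t] [j' t'] _ _; rewrite /f /= => /pv_inj e.
  have qm := qp_le p j; have qm' := qp_le p j'.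
  have qD := qp_geD p j; have qD' := qp_geD p j'.
  have {}e := e ltac:(lia) ltac:(lia).
  have ht := ltn_ord t; have ht' := ltn_ord t'.
  have h1 : (h + p j) < (h + p j').+1.
    rewrite -(ltn_pmul2r (ltnW hD)) mulSn; rewrite /qp in e qm qm' qD qD' *; lia.
  have h2 : (h + p j') < (h + p j).+1.
    rewrite -(ltn_pmul2r (ltnW hD)) mulSn; rewrite /qp in e qm qm' qD qD' *; lia.
  have ejj : j = j' by apply: (@perm_inj _ p); apply: ord_inj; lia.
  subst j'; congr pair; apply: ord_inj; lia.
have := card_in_imset inj; rewrite cardsX cardsT card_ord => <-.
apply: subset_leq_card; apply/subsetP => v /imsetP[[j t]].
rewrite !inE /= => /andP[/andP[_ /forallP fu] _] ->.
exact: fu.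
Qed.

Lemma AZ_le : #|Aset| + #|vj @: J2| + #|Zset| <= #|W|.
Proof.
have Alw v : v \in Aset -> lw v.
  rewrite inE => /andP[vW /andP[p0 pW]].
  apply/existsP; exists (pv s (pos s v).-1); rewrite pW pos_pv /=; last first.
    have := pos_le s v; lia.
  apply/andP; split; first by lia.
  apply: connect1; rewrite /induced_adj vW pW /=.
  have := path_in (i := (pos s v).-1) ltac:(have := pos_le s v; lia).
  by rewrite prednK // pv_pos setUC.
rewrite -card_disjU; last first.
  move=> x hA /imsetP[j hj ex]; subst x.
  by have [_ h1 _ _] := vj_spec hj; move/negP: h1.
rewrite -card_disjU; last first.
  move=> x /setUP[hA|/imsetP[j hj ex]]; rewrite inE => /andP[_ /negP]; apply.
    exact: Alw.
  by subst x; have [_ _ h1 _] := vj_spec hj.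
apply: subset_leq_card; apply/subsetP => x /setUP[/setUP[|]|].
- by rewrite inE => /andP[].
- by move=> /imsetP[j hj ex]; subst x; have [? _ _ _] := vj_spec hj.
- by rewrite inE => /andP[].
Qed.

Lemma cr_le : cycle_rank_on E W <= #|J1|.
Proof.
rewrite /cycle_rank_on /n_components_on.
have c1 := comp_le (pos s) R_sym R_W.
have c2 := edges_le; have c3 := Pin_le; have c4 := Jin_split.
have c5 := AZ_le.
have c6 : #|J2| = #|vj @: J2| by rewrite (card_in_imset vj_inj).
rewrite /Zset /lw in c5.
rewrite leq_subLR.
apply: leq_trans (leq_add c2 c1) _.
apply: (leq_trans (leq_add (leq_add c3 (eq_leq c4)) (leqnn _))).
rewrite c6.
apply: leq_trans _ (leq_add c5 (leqnn #|J1|)).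
set x1 := #|Aset|. set x2 := #|[set vj x | x in J2]|. set x3 := #|[set v in W | _]|. set x4 := #|J1|.
lia.
Qed.

End Hered.

Lemma pathE_inj s s' : pv s 0 = pv s' 0 -> pathE s = pathE s' -> s = s'.
Proof.
move=> e0 eP.
have key : forall i, i <= m -> forall k, k <= i -> pv s k = pv s' k.
  elim => [|i IH] hi k hk; first by have -> : k = 0 by lia.
  case: (leqP k i) => hki; first by apply: IH => //; lia.
  have -> : k = i.+1 by lia.
  have : [set pv s' i; pv s' i.+1] \in pathE s'.
    by apply/imsetP; exists (Ordinal hi).
  rewrite -eP => /imsetP[l _ El].
  rewrite -(IH (ltnW hi) i (leqnn i)) in El.
  have hl := ltn_ord l.
  case: (set2_eq El) => [[a b]|[a b]].
    have := pv_inj (ltnW hi) (ltnW hl) a => il.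
    by rewrite b -il.
  have il := pv_inj (ltnW hi) hl a.
  rewrite (IH (ltnW hi) l ltac:(lia)) in b.
  have := pv_inj hi (ltnW hl) b; lia.
apply/permP => x; have := key m (leqnn m) x (leq_ord x).
by rewrite /pv inord_val.
Qed.

Lemma chord_recover s p p' : Gr s p = Gr s p' -> p = p'.
Proof.
move=> eG; apply/permP => j; apply: ord_inj.
have : [set pv s (j * D); pv s (qp p j)] \in Gr s p' by rewrite -eG chord_in.
have q1 := qp_ge p j; have q2 := qp_le p j; have q3 := jD_le j.
rewrite inE => /orP[] /imsetP[l _ El]; have hl := ltn_ord l.
  case: (set2_eq El) => [[a b]|[a b]].
    have := pv_inj q3 (ltnW hl) a; have := pv_inj q2 hl b; lia.
  have := pv_inj q3 hl a; have := pv_inj q2 (ltnW hl) b; lia.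
have r1 := qp_ge p' l; have r2 := qp_le p' l; have r3 := jD_le l.
have r4 := qp_geD p' l.
case: (set2_eq El) => [[a b]|[a b]].
  have e1 := pv_inj q3 r3 a; have e2 := pv_inj q2 r2 b.
  have jl : j = l.
    apply: ord_inj; apply/eqP; rewrite -(eqn_pmul2r (ltnW hD)); apply/eqP; lia.
  subst l; move: e2; rewrite /qp => /eqP; rewrite eqn_pmul2r ?(ltnW hD) //.
  move/eqP; lia.
have e1 := pv_inj q3 r2 a; have := ltn_ord j; have := ltn_ord (p' l).
move: e1; rewrite /qp => e1 hx hy.
have : j * D < h * D by rewrite ltn_pmul2r ?(ltnW hD).
nia.
Qed.

Lemma Gr_card s p : #|Gr s p| <= m + h.
Proof.
apply: leq_trans (leq_card_setU _ _) _.
apply: leq_add; apply: leq_trans (leq_imset_card _ _) _; by rewrite card_ord.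
Qed.

Lemma fiber_le (G : {set {set 'I_m.+1}}) :
  #|[set x : {perm 'I_m.+1} * {perm 'I_h} | Gr x.1 x.2 == G]| <= m.+1 * 2 ^ (m + h).
Proof.
set F := [set x | _].
case: (set_0Vmem F) => [->|[x0 x0F]]; first by rewrite cards0.
have hG : #|G| <= m + h by move: x0F; rewrite inE => /eqP <-; apply: Gr_card.
pose f (x : {perm 'I_m.+1} * {perm 'I_h}) := (pv x.1 0, pathE x.1).
have inj : {in F &, injective f}.
  move=> [s1 p1] [s2 p2]; rewrite !inE /f /= => /eqP e1 /eqP e2 [] a b.
  have es := pathE_inj a b; subst s2.
  by rewrite (chord_recover (etrans e1 (esym e2))).
rewrite -(card_in_imset inj).
apply: (@leq_trans #|setX [set: 'I_m.+1] (powerset G)|).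
  apply: subset_leq_card; apply/subsetP => y /imsetP[[s1 p1]].
  rewrite inE /= => /eqP e ->; rewrite in_setX in_setT /= powersetE -e.
  by apply/subsetP => z zin; rewrite inE zin.
rewrite cardsX cardsT card_ord card_powerset leq_mul2l; apply/orP; right.
by rewrite leq_exp2l.
Qed.


Lemma total (g : nat -> nat) :
  (forall w k, 0 < w -> w <= m.+1 -> k * D <= w -> k <= g w) ->
  m.+1`! * h`! <= count_Hered_Fg g m.+1 * (m.+1 * 2 ^ (m + h)).
Proof.
move=> Hg.
set img := [set Gr x.1 x.2 | x : {perm 'I_m.+1} * {perm 'I_h}].
have sub : img \subset [set E | simple_graph E && in_Hered_Fg g E].
  apply/subsetP => G /imsetP[[s p] _ ->]; rewrite inE Gr_simple /=.
  apply/forallP => W; apply/implyP => W0; rewrite /in_Fg_on.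
  have c1 := cr_le s p W; have c2 := J1_le s p W.
  have w0 : 0 < #|W| by rewrite card_gt0.
  have w1 : #|W| <= m.+1 by have := max_card (mem W); rewrite card_ord.
  exact: leq_trans c1 (Hg _ _ w0 w1 c2).
apply: leq_trans _ (leq_mul (subset_leq_card sub) (leqnn _)).
rewrite -card_Sn -card_Sn -card_prod.
have -> : #|{: {perm 'I_m.+1} * {perm 'I_h}}| =
   \sum_(x : {perm 'I_m.+1} * {perm 'I_h}) 1.
  by rewrite sum1_card.
rewrite (partition_big (fun x => Gr x.1 x.2) (mem img)); last first.
  by move=> x _; apply/imsetP; exists x.
rewrite -sum_nat_const; apply: leq_sum => G _.
apply: leq_trans _ (fiber_le G).
rewrite sum1dep_card; apply: eq_leq; apply: eq_card => x; by rewrite !inE.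
Qed.

End Constr.

Lemma pow_big k : 6 <= k -> 4 * (2 * k + 1) <= 2 ^ k.
Proof.
elim: k => // k IH hk; case: (ltnP 6 k.+1) => h6.
  have := IH h6; rewrite expnS; lia.
by have -> : k = 5 by lia.
Qed.

Lemma goalA (a D h n x k : nat) :
  6 <= k -> 2 * k <= a -> 2 ^ a <= n -> n < 2 * D * (h + 1) -> h <= 2 * x + 1 ->
  a <= 2 * k + 1 -> D <= 2 * k + 1 -> 2 ^ k <= x.
Proof.
move=> hk hka ha hn hx hak hD.
have e : 2 ^ a >= 2 ^ k * 2 ^ k by rewrite -expnD leq_exp2l //; lia.
set P := 2 ^ k in e *.
have hP := @pow_big k hk; rewrite -/P in hP.
rewrite leqNgt; apply/negP => hlt.
have h1 : 2 * D * (h + 1) <= 4 * (2 * k + 1) * P.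
  have : 2 * D * (h + 1) <= 2 * D * (2 * (x + 1)) by apply: leq_mul => //; lia.
  have : 2 * D * (2 * (x + 1)) <= 2 * (2 * k + 1) * (2 * P) by apply: leq_mul; lia.
  lia.
have h2 : 4 * (2 * k + 1) * P <= P * P by apply: leq_mul.
lia.
Qed.

Lemma goalB (B a c D h n x k : nat) :
  c = 16 * (B + 4) -> c * D <= a + c ->
  2 * D * h <= n -> 2 * x <= h ->
  a <= 2 * k + 1 -> c + 1 <= D -> 4 * (c + 1) <= n -> a <= n ->
  n < 4 * D * (x + 1) ->
  (B + 3) * n <= k * x.
Proof.
move=> hc h1 h3 h5 h8 hD hn han e1.
have f4 : c * n < c * (4 * D * (x + 1)) by rewrite ltn_pmul2l //; lia.
have f6 : (c * D) * (x + 1) <= (a + c) * (x + 1) by apply: leq_mul.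
have f1 : a * x <= (2 * k + 1) * x by apply: leq_mul.
have f2 : (c + 1) * x <= D * x by apply: leq_mul.
have f3 : D * (2 * x) <= D * h by apply: leq_mul.
have f0 : c * n = 16 * (B * n) + 64 * n by rewrite hc; lia.
lia.
Qed.

Lemma INR_expn x k : INR (x ^ k) = (INR x ^ k)%R.
Proof.
elim: k => [|k IH]; first by rewrite expn0.
by rewrite expnS mult_INR IH.
Qed.

Lemma ln_le' x y : (0 < x)%R -> (x <= y)%R -> (ln x <= ln y)%R.
Proof.
move=> hx hxy; case: (Rle_lt_or_eq_dec _ _ hxy) => h.
  by apply: Rlt_le; apply: ln_increasing.
by rewrite h; apply: Rle_refl.
Qed.

Lemma exp_le' x y : (x <= y)%R -> (exp x <= exp y)%R.
Proof.
move=> hxy; case: (Rle_lt_or_eq_dec _ _ hxy) => h.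
  by apply: Rlt_le; apply: exp_increasing.
by rewrite h; apply: Rle_refl.
Qed.

Lemma ln2_lt1 : (ln 2 < 1)%R.
Proof.
rewrite -(ln_exp 1); apply: ln_increasing; first lra.
have := exp_ineq1 1 ltac:(lra); lra.
Qed.

Lemma real_part (w c D a n gw : nat) : (2 <= w)%N -> (w <= n)%N -> (n < 2 ^ a.+1)%N ->
  (a < c * D)%N -> (0 < c)%N ->
  (INR w / ln (INR w) <= / INR c * INR gw)%R -> (w <= gw * D)%N.
Proof.
move=> h2 hwn hn ha hc H.
have w1 : (1 < INR w)%R by apply: (lt_INR 1); apply/ltP.
have Lpos : (0 < ln (INR w))%R by rewrite -ln_1; apply: ln_increasing; lra.
have npos : (0 < INR n)%R by apply: (lt_INR 0); apply/ltP; lia.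
have L1 : (ln (INR w) <= ln (INR n))%R by apply: ln_le'; [lra | apply: le_INR; apply/leP].
have L2 : (ln (INR n) < INR a.+1 * ln 2)%R.
  rewrite -ln_pow; last lra.
  apply: ln_increasing => //.
  have := lt_INR _ _ (elimT ltP hn); rewrite INR_expn //.
have l2 := ln_lt_2.
have L3 : (INR a.+1 <= INR c * INR D)%R by rewrite -mult_INR; apply: le_INR; apply/leP.
have a0 : (0 < INR a.+1)%R by apply: (lt_INR 0); apply/ltP.
have L4 : (ln (INR w) <= INR c * INR D)%R.
  have := ln2_lt1; nra.
have c0 : (0 < INR c)%R by apply: (lt_INR 0); apply/ltP.
have g0 : (0 <= INR gw)%R by apply: pos_INR.
have H2 : (INR w <= / INR c * INR gw * ln (INR w))%R.
  have := Rmult_le_compat_r _ _ _ (Rlt_le _ _ Lpos) H.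
  by rewrite /Rdiv Rmult_assoc Rinv_l ?Rmult_1_r //; lra.
have H3 : (/ INR c * INR gw * ln (INR w) <= INR gw * INR D)%R.
  have ic : (0 < / INR c)%R by apply: Rinv_0_lt_compat.
  have : (/ INR c * INR gw * ln (INR w) <= / INR c * INR gw * (INR c * INR D))%R.
    apply: Rmult_le_compat_l => //; nra.
  have -> : (/ INR c * INR gw * (INR c * INR D) = INR gw * INR D)%R.
    by field; lra.
  done.
apply/leP; apply: INR_le; rewrite mult_INR; lra.
Qed.

Lemma final_real (M : R) (B c f n : nat) : (M < INR B)%R -> (1 <= B)%N -> (0 < n)%N ->
  (f * B ^ n <= c)%N -> (0 < f)%N -> (M <= Rpower (INR c / INR f) (/ INR n))%R.
Proof.
move=> hM hB hn hc hf.
have f0 : (0 < INR f)%R by apply: (lt_INR 0); apply/ltP.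
have B0 : (1 <= INR B)%R by apply: (le_INR 1); apply/leP.
have n0 : (0 < INR n)%R by apply: (lt_INR 0); apply/ltP.
have Bn : (0 < INR B ^ n)%R by apply: pow_lt; lra.
have H1 : (INR f * INR B ^ n <= INR c)%R.
  by rewrite -INR_expn -mult_INR; apply: le_INR; apply/leP.
have H2 : (INR B ^ n <= INR c / INR f)%R.
  apply: (Rmult_le_reg_l (INR f)) => //.
  by rewrite /Rdiv -Rmult_assoc (Rmult_comm (INR f) (INR c)) Rmult_assoc Rinv_r ?Rmult_1_r; lra.
rewrite /Rpower.
have H3 : (ln (INR B ^ n) <= ln (INR c / INR f))%R by apply: ln_le'.
rewrite ln_pow in H3; last lra.
have H4 : (ln (INR B) <= / INR n * ln (INR c / INR f))%R.
  apply: (Rmult_le_reg_l (INR n)) => //.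
  rewrite -Rmult_assoc Rinv_r ?Rmult_1_l; lra.
apply: Rle_trans (Rlt_le _ _ hM) _.
rewrite -{1}(exp_ln (INR B)); last lra.
exact: exp_le'.
Qed.


Lemma count_big (g : nat -> nat) (B N1 : nat) :
  (forall w, (N1 <= w)%N ->
     (INR w / ln (INR w) <= / INR (16 * (B + 4)) * INR (g w))%R) ->
  exists N, forall n, (N <= n)%N -> (0 < n)%N /\ (n`! * B ^ n <= count_Hered_Fg g n)%N.
Proof.
move=> Hg.
set c := 16 * (B + 4).
have c64 : 64 <= c by rewrite /c; lia.
set A0 := c * (N1 + c + 2) + 14.
exists (2 ^ A0) => n hn.
have n0 : 0 < n by apply: leq_trans hn; rewrite expn_gt0.
split => //.
case: n n0 hn => [//|m] _ hn.
set n := m.+1.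
set a := trunc_log 2 n.
have ha1 : 2 ^ a <= n by apply: trunc_logP.
have ha2 : n < 2 ^ a.+1 by apply: trunc_log_ltn.
have hA0 : A0 <= a by apply: trunc_log_max.
have han : a <= n by apply: leq_trans (ltnW (ltn_expl _ _)) ha1.
set D := a %/ c + 1.
have hdiv := divn_eq a c.
have hmod : a %% c < c by rewrite ltn_mod; lia.
have D1 : c * D <= a + c by rewrite /D mulnDr muln1 mulnC; lia.
have D2 : a < c * D by rewrite /D mulnDr muln1 mulnC; lia.
have D3 : N1 + c + 2 <= a %/ c.
  by rewrite leq_divRL; [|lia]; apply: leq_trans _ hA0; rewrite /A0 mulnC; lia.
have D4 : (D - 1) * 64 <= (D - 1) * c by apply: leq_mul.
set h := n %/ (2 * D).
have H1 : h * (2 * D) <= n by apply: leq_trunc_div.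
have H2 : n < h.+1 * (2 * D) by apply: ltn_ceil; lia.
set x := h %/ 2.
have X1 := divn_eq h 2; have X2 : h %% 2 < 2 by rewrite ltn_mod.
set k := a %/ 2.
have K1 := divn_eq a 2; have K2 : a %% 2 < 2 by rewrite ltn_mod.
have e1 : n < 4 * D * (x + 1).
  have : h.+1 * (2 * D) <= (2 * (x + 1)) * (2 * D) by apply: leq_mul => //; lia.
  lia.
have gA : 2 ^ k <= x.
  apply: (@goalA a D h n x k); try lia.
have c2 : c * c <= c * (N1 + c + 2) by apply: leq_mul => //; lia.
have c3 : 64 * c <= c * c by apply: leq_mul.
have gB : (B + 3) * n <= k * x.
  apply: (@goalB B a c D h n x k) => //; lia.
have hfact : 2 ^ ((B + 3) * n) <= h`!.
  apply: leq_trans (fact_ge (2 ^ k) h).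
  apply: (@leq_trans (2 ^ (k * x))); first by rewrite leq_exp2l.
  rewrite expnM; apply: leq_pexp2l; first by rewrite expn_gt0.
  lia.
set Q := n * 2 ^ (m + h).
have hQ : B ^ n * Q <= 2 ^ ((B + 3) * n).
  have q1 : B ^ n <= 2 ^ (B * n).
    rewrite expnM leq_exp2r //; exact: ltnW (ltn_expl _ _).
  have q2 : n <= 2 ^ n by exact: ltnW (ltn_expl _ _).
  have q3 : 2 ^ (m + h) <= 2 ^ (2 * n) by rewrite leq_exp2l //; lia.
  have : B ^ n * Q <= 2 ^ (B * n) * (2 ^ n * 2 ^ (2 * n)).
    by apply: leq_mul => //; apply: leq_mul.
  by rewrite -!expnD; have -> : B * n + (n + 2 * n) = (B + 3) * n by lia.
have Hg' : forall w k0, 0 < w -> w <= m.+1 -> k0 * D <= w -> k0 <= g w.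
  move=> w k0 w0 wn hk.
  case: (ltnP w D) => wD.
    have : k0 * D < 1 * D by lia.
    rewrite ltn_pmul2r; lia.
  have hw := @real_part w c D a n (g w) ltac:(lia) wn ha2 D2 ltac:(lia)
     (Hg w ltac:(lia)).
  rewrite -(@leq_pmul2r D); [lia | lia].
have T := @total m D h ltac:(lia) ltac:(lia) g Hg'.
have Qpos : 0 < Q by rewrite /Q muln_gt0 expn_gt0.
rewrite -(@leq_pmul2r Q) //.
apply: leq_trans _ T.
rewrite -mulnA leq_mul2l; apply/orP; right.
exact: leq_trans hQ hfact.
Qed.

Theorem theorem5 (g : nat -> nat) :
  (* g(n) >> n / log n *)
  (forall eps : R, (0 < eps)%R ->
     exists N : nat, forall n : nat, (N <= n)%N ->
       (INR n / ln (INR n) <= eps * INR (g n))%R) ->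
  (* (|Hered(F^g)_n| / n!)^(1/n) -> +infinity *)
  forall M : R, exists N : nat, forall n : nat, (N <= n)%N ->
    (M <= Rpower (INR (count_Hered_Fg g n) / INR (n`!)) (/ INR n))%R.
Proof.
move=> Hg M.
have [B0 HB0] := INR_unbounded M.
set B := B0.+1.
have hMB : (M < INR B)%R.
  have : (INR B0 <= INR B)%R by apply: le_INR; apply/leP; rewrite /B.
  lra.
have cpos : (0 < / INR (16 * (B + 4)))%R.
  apply: Rinv_0_lt_compat; apply: (lt_INR 0); apply/ltP; lia.
have [N1 HN1] := Hg _ cpos.
have [N HN] := @count_big g B N1 HN1.
exists N => n hn.
have [n0 hc] := HN n hn.
apply: (@final_real M B _ (n`!) n) => //.
exact: fact_gt0.
Qed.
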